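(* Let $\mathcal{M}$ and $\mathcal{M}'$ be ergodic Markov chains on the same finite state space $\Omega$, and let $f$ be an $(\mathcal{M},\mathcal{M}')$-flow such that $\kappa(f)<\infty$. Then there is an $(\mathcal{M},\mathcal{M}')$-flow $f'$ with $A(f')\le 8\,\kappa(f)\,B(f)$.
   Context: A (discrete-time) Markov chain on a finite state space $\Omega$ with transition matrix $P$ is ergodic if irreducible and aperiodic; it then has a unique stationary distribution $\pi>0$. Let $\mathcal{M}$ have transition matrix $P$ and stationary distribution $\pi$, and $\mathcal{M}'$ have transition matrix $P'$ and stationary distribution $\pi'$. Let $E^*(\mathcal{M})=\{(x,y): P(x,y)>0\}$ (pairs not necessarily distinct), similarly $E^*(\mathcal{M}')$. For $(x,y)\in E^*(\mathcal{M}')$, $\mathcal{P}_{x,y}$ is the set of paths $\gamma=(x=x_0,\dots,x_k=y)$ with each $(x_i,x_{i+1})\in E^*(\mathcal{M})$ and each $(z,w)\in E^*(\mathcal{M})$ appearing at most twice as a consecutive pair on $\gamma$; $|\gamma|=k$. $\mathcal{P}=\bigcup_{(x,y)\in E^*(\mathcal{M}')}\mathcal{P}_{x,y}$. An $(\mathcal{M},\mathcal{M}')$-flow is $f:\mathcal{P}\to[0,1]$ with $\sum_{\gamma\in\mathcal{P}_{x,y}}f(\gamma)=\pi'(x)P'(x,y)$ for all $(x,y)\in E^*(\mathcal{M}')$. With $r((z,w),\gamma)$ the number of times $(z,w)$ appears on $\gamma$, the edge congestion is $A_{z,w}(f)=\frac{1}{\pi(z)P(z,w)}\sum_{\gamma:(z,w)\in\gamma}r((z,w),\gamma)|\gamma|f(\gamma)$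 and $A(f)=\max_{(z,w)\in E^*(\mathcal{M})}A_{z,w}(f)$. The state congestion of $z\in\Omega$ is $B_z(f)=\frac{1}{\pi(z)}\sum_{\gamma\in\mathcal{P}: z\in\gamma}|\gamma|f(\gamma)$ (sum over paths visiting $z$), and $B(f)=\max_{z}B_z(f)$. The time-reversal has transition matrix $R(P)(w,x)=\pi(x)P(x,w)/\pi(w)$. Define $\kappa(f)=\max_{(z,w):A_{z,w}(f)>0}\left(\sum_{x\in\Omega}\min\{P(z,x),R(P)(w,x)\}\right)^{-1}$ (with $1/0=\infty$). *)

(* Defs.v *)
From HB Require Import structures.
From mathcomp Require Import all_boot all_order all_algebra.
Set Implicit Arguments. Unset Strict Implicit. Unset Printing Implicit Defensive.
Import Order.TTheory GRing.Theory Num.Theory.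
Local Open Scope ring_scope.

Section Markov.
Variables (R : realFieldType) (T : finType).
Implicit Types (P Q : T -> T -> R) (pi : T -> R) (f : seq T -> R).

Definition stochastic P :=
  (forall x y, 0 <= P x y) /\ (forall x, \sum_y P x y = 1).

Fixpoint mpow P (t : nat) : T -> T -> R :=
  match t with
  | 0 => fun x y => (x == y)%:R
  | t'.+1 => fun x y => \sum_z mpow P t' x z * P z y
  end.

Definition irreducible P := forall x y, exists t, 0 < mpow P t x y.

(** gcd {t >= 1 : P^t(x,x) > 0} = 1 for every x: the only common divisor is 1. *)
Definition aperiodic P :=
  forall x (d : nat),
    (forall t, (0 < t)%N -> 0 < mpow P t x x -> (d %| t)%N) -> d = 1%N.

Definition ergodic P := [/\ stochastic P, irreducible P & aperiodic P].

Definition stationary P pi :=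
  [/\ forall x, 0 <= pi x, \sum_x pi x = 1 & forall y, \sum_x pi x * P x y = pi y].

Definition edge P x y : bool := 0 < P x y.

(** A path is its vertex sequence (x_0, ..., x_k); its consecutive pairs: *)
Definition steps (g : seq T) : seq (T * T) := zip g (behead g).
Definition plen (g : seq T) : nat := (size g).-1.
Definition r_occ (e : T * T) (g : seq T) : nat := count_mem e (steps g).

Definition is_path_xy P x y (g : seq T) : bool :=
  [&& g != [::], head x g == x, last x g == y,
      all (fun e => edge P e.1 e.2) (steps g) &
      all (fun e => r_occ e g <= 2)%N (steps g)].

Definition in_Pxy P P' x y (g : seq T) : bool := edge P' x y && is_path_xy P x y g.

Definition in_P P P' (g : seq T) : bool := [exists x, exists y, in_Pxy P P' x y g].

(** Every path in P has at most 2|E*(M)| <= 2|T|^2 edges, hence at most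
    maxlen = 2|T|^2+1 vertices; psum sums F over the paths satisfying Pr among
    all vertex sequences with at most maxlen vertices (each exactly once). *)
Definition maxlen : nat := (2 * #|T| ^ 2).+1.

Definition psum (Pr : pred (seq T)) (F : seq T -> R) : R :=
  \sum_(k < maxlen) \sum_(t : (k.+1).-tuple T | Pr (tval t)) F (tval t).

(** (M,M')-flow: f : P -> [0,1] (values outside P are irrelevant). *)
Definition is_flow P P' pi' f :=
  (forall g, in_P P P' g -> 0 <= f g <= 1) /\
  (forall x y, edge P' x y -> psum (in_Pxy P P' x y) f = pi' x * P' x y).

Definition Acong P P' pi f z w : R :=
  (pi z * P z w)^-1 *
  psum (fun g => in_P P P' g && ((z, w) \in steps g))
       (fun g => (r_occ (z, w) g)%:R * (plen g)%:R * f g).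

(** A(f) = max over E*(M) (all A_{z,w} are >= 0) *)
Definition Amax P P' pi f : R :=
  \big[Num.max/0]_(e : T * T | edge P e.1 e.2) Acong P P' pi f e.1 e.2.

Definition Bcong P P' pi f z : R :=
  (pi z)^-1 * psum (fun g => in_P P P' g && (z \in g)) (fun g => (plen g)%:R * f g).

Definition Bmax P P' pi f : R := \big[Num.max/0]_(z : T) Bcong P P' pi f z.

Definition revP P pi (w x : T) : R := pi x * P x w / pi w.

Definition overlap P pi (z w : T) : R := \sum_x Num.min (P z x) (revP P pi w x).

(** kappa(f) < oo : no reciprocal 1/0 occurs in the max defining kappa(f). *)
Definition kappa_finite P P' pi f :=
  forall z w, edge P z w -> 0 < Acong P P' pi f z w -> 0 < overlap P pi z w.

(** kappa(f), meaningful (real) when kappa_finite holds *)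
Definition kappa P P' pi f : R :=
  \big[Num.max/0]_(e : T * T | edge P e.1 e.2 && (0 < Acong P P' pi f e.1 e.2))
     (overlap P pi e.1 e.2)^-1.

End Markov.

(* Main.v *)
Require Import Defs.
From HB Require Import structures.
From mathcomp Require Import all_boot all_order all_algebra.
From mathcomp Require Import zify ring lra.
Import Order.TTheory GRing.Theory Num.Theory.
Set Implicit Arguments. Unset Strict Implicit. Unset Printing Implicit Defensive.

Section SeqStuff.
Variable T : finType.

Lemma steps_cons (x : T) s :
  steps (x :: s) = if s is y :: _ then (x, y) :: steps s else [::].
Proof. by case: s. Qed.

Lemma steps_nil : steps ([::] : seq T) = [::]. Proof. by []. Qed.

Lemma steps_fst_sub (s : seq T) e : e \in steps s -> e.1 \in s.
Proof.
elim: s => [|x s IH] //; rewrite steps_cons; case: s IH => [|y s] IH //.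
rewrite inE => /orP [/eqP -> | /IH h]; first by rewrite inE eqxx.
by rewrite inE h orbT.
Qed.

Lemma steps_snd_sub (s : seq T) e : e \in steps s -> e.2 \in s.
Proof.
elim: s => [|x s IH] //; rewrite steps_cons; case: s IH => [|y s] IH //.
rewrite inE => /orP [/eqP -> | /IH h]; first by rewrite /= !inE eqxx orbT.
by rewrite inE h orbT.
Qed.

Lemma uniq_steps_fst (s : seq T) : uniq s -> uniq (map fst (steps s)).
Proof.
elim: s => [|x s IH] //; rewrite steps_cons; case: s IH => [|y s] IH //= /andP [xn us].
rewrite IH // andbT; apply/negP => /mapP [e /steps_fst_sub he ex].
by move: xn; rewrite ex he.
Qed.

Lemma steps_snd_tail (x : T) s e : e \in steps (x :: s) -> e.2 \in s.
Proof.
elim: s x => [|y s IH] x //; rewrite steps_cons inE => /orP [/eqP -> | /IH h].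
  by rewrite inE eqxx.
by rewrite inE h orbT.
Qed.

Lemma uniq_steps_snd (s : seq T) : uniq s -> uniq (map snd (steps s)).
Proof.
elim: s => [|x s IH] //; rewrite steps_cons; case: s IH => [|y s] IH //= /andP [xn us].
rewrite IH // andbT; case/andP: us => yn _.
apply/negP => /mapP [e /steps_snd_tail he ey].
by move: yn; rewrite ey he.
Qed.

Lemma uniq_steps (s : seq T) : uniq s -> uniq (steps s).
Proof. by move=> us; apply: (map_uniq (f := fst)); apply: uniq_steps_fst. Qed.

Lemma steps_fst_unique (s : seq T) z w w' : uniq s ->
  (z, w) \in steps s -> (z, w') \in steps s -> w = w'.
Proof.
elim: s => [|x s IH] //; rewrite steps_cons; case: s IH => [|y s] IH //= /andP [xn us].
rewrite !inE => /orP [/eqP [e1 e2] | h1] /orP [/eqP [e3 e4] | h2].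
- by rewrite e2 e4.
- by move: xn; rewrite -e1 (steps_fst_sub h2).
- by move: xn; rewrite -e3 (steps_fst_sub h1).
- exact: IH.
Qed.

Fixpoint lerase (s : seq T) : seq T :=
  match s with
  | [::] => [::]
  | x :: s' => let r := lerase s' in
               if x \in r then drop (index x r) r else x :: r
  end.

Lemma lerase_nil (s : seq T) : (lerase s == [::]) = (s == [::]).
Proof.
case: s => [|x s] //=; case: ifP => // xr.
rewrite (drop_nth x) ?index_mem //.
Qed.

Lemma lerase_head (s : seq T) y : head y (lerase s) = head y s.
Proof.
case: s => [|x s] //=; case: ifP => // xr.
by rewrite (drop_nth x) ?index_mem //= nth_index.
Qed.

Lemma last_nonempty (s : seq T) a b : s != [::] -> last a s = last b s.
Proof. by case: s. Qed.

Lemma lerase_last (s : seq T) y : last y (lerase s) = last y s.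
Proof.
elim: s y => [|x s IH] y //=; case: ifP => xr.
  have sn : s != [::] by case: (s) xr.
  set r := lerase s in IH xr *.
  have dn : drop (index x r) r != [::].
    by rewrite -size_eq0 size_drop subn_eq0 -ltnNge index_mem.
  rewrite (last_nonempty y (last y (take (index x r) r)) dn) -last_cat cat_take_drop.
  by rewrite IH; apply: last_nonempty.
case: s IH xr => [|z s] IH xr //=.
Qed.

Lemma lerase_uniq (s : seq T) : uniq (lerase s).
Proof.
elim: s => [|x s IH] //=; case: ifP => xr; first exact: drop_uniq.
by rewrite /= xr IH.
Qed.

Lemma lerase_sub (s : seq T) : {subset lerase s <= s}.
Proof.
elim: s => [|x s IH] //= y; case: ifP => xr.
  by move=> /mem_drop /IH; rewrite inE => ->; rewrite orbT.
by rewrite !inE => /orP [-> // | /IH ->]; rewrite orbT.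
Qed.

Lemma steps_drop (s : seq T) n : {subset steps (drop n s) <= steps s}.
Proof.
elim: n s => [|n IH] s; first by rewrite drop0.
case: s => [|x s] //= e /IH; rewrite steps_cons; case: s => [|y s] //.
by rewrite inE => ->; rewrite orbT.
Qed.

Lemma lerase_steps (s : seq T) : {subset steps (lerase s) <= steps s}.
Proof.
elim: s => [|x s IH] //= e; case: ifP => xr.
  move=> /steps_drop /IH; rewrite steps_cons; case: (s) => [|y s'] //.
  by rewrite inE => ->; rewrite orbT.
rewrite steps_cons (steps_cons x s).
case: s IH xr => [|y s] IH xr; first by [].
have hl := lerase_nil (y :: s); have hh := lerase_head (y :: s) y.
move: IH hl hh; case: (lerase (y :: s)) => [|z r] IH hl hh //.
rewrite /= in hh; subst z; rewrite !inE => /orP [-> // | h].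
by rewrite (IH _ h) orbT.
Qed.

Lemma lerase_size (s : seq T) : (size (lerase s) <= size s)%N.
Proof.
elim: s => [|x s IH] //=; case: ifP => xr /=; last by [].
by rewrite size_drop (leq_trans (leq_subr _ _)) // ltnW // ltnS.
Qed.

Fixpoint det (u : T -> T) (s : seq T) : seq T :=
  match s with
  | [::] => [::]
  | z :: s' => match s' with
               | [::] => [:: z]
               | w :: _ => if u z \in [:: z; w] then z :: det u s'
                           else z :: u z :: det u s'
               end
  end.

Lemma det_cons u x s : exists r, det u (x :: s) = x :: r.
Proof. by case: s => [|y s] /=; [exists [::] | case: ifP => _; eexists]. Qed.

Lemma det_cons2 u x w s : det u (x :: w :: s) =
  if u x \in [:: x; w] then x :: det u (w :: s) else x :: u x :: det u (w :: s).
Proof. by []. Qed.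

Lemma det_head u s y : head y (det u s) = head y s.
Proof. by case: s => [|x [|w s]] //=; case: ifP. Qed.

Lemma det_last u s y : last y (det u s) = last y s.
Proof.
elim: s y => [|x s IH] y //=.
case: s IH => [|w s] IH //=.
by case: ifP => _ /=; rewrite IH.
Qed.

Lemma det_plen u s : (size (det u s) <= (size s).*2.-1)%N.
Proof.
elim: s => [|x s IH] //; case: s IH => [|w s] IH //.
rewrite det_cons2; case: ifP => _ /=.
  by rewrite !doubleS /= ltnS (leq_trans IH) // doubleS /= leqnSn.
by rewrite !doubleS /= !ltnS (leq_trans IH) // doubleS.
Qed.

Lemma det_steps u s a b : (a, b) \in steps (det u s) ->
  exists2 e, e \in steps s &
   (((e.1 == a) && (u e.1 == b)) || ((u e.1 == a) && (e.2 == b))) &&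
   ((u e.1 \in [:: e.1; e.2]) ==> ((a, b) == e)) &&
   ((u e.1 \notin [:: e.1; e.2]) ==> (((a, b) == (e.1, u e.1)) || ((a, b) == (u e.1, e.2)))).
Proof.
elim: s => [|x s IH] //; case: s IH => [|w s] IH //.
have [r hr] := det_cons u w s.
rewrite (steps_cons x (w :: s)) det_cons2; case: ifP => hu; rewrite hr.
  rewrite (steps_cons x (w :: r)).
  rewrite inE => /orP [/eqP [-> ->] | ].
    exists (x, w); first by rewrite inE eqxx.
    rewrite /= hu /= eqxx andbT.
    move: hu; rewrite !inE => /orP [/eqP -> | /eqP ->]; rewrite !eqxx ?orbT //.
  rewrite -hr => /IH [e he H]; exists e => //; by rewrite inE he orbT.
rewrite (steps_cons x (u x :: w :: r)) (steps_cons (u x) (w :: r)).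
rewrite !inE => /orP [/eqP [-> ->] | /orP [/eqP [-> ->] | ]].
- exists (x, w); first by rewrite inE eqxx.
  by rewrite /= hu !eqxx.
- exists (x, w); first by rewrite inE eqxx.
  by rewrite /= hu !eqxx !orbT.
- rewrite -hr => /IH [e he H]; exists e => //; by rewrite inE he orbT.
Qed.

End SeqStuff.

Local Open Scope ring_scope.

Section Psum.
Variables (R : realFieldType) (T : finType).
Implicit Types (Pr Q : pred (seq T)) (F G : seq T -> R).

Lemma psum_ler Pr F G :
  (forall g, Pr g -> (0 < size g <= maxlen T)%N -> F g <= G g) -> psum Pr F <= psum Pr G.
Proof.
move=> H; rewrite /psum; apply: ler_sum => k _; apply: ler_sum => t Pt.
by apply: H => //; rewrite size_tuple ltn_ord.
Qed.

Lemma psum_ext Pr F G :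
  (forall g, Pr g -> (0 < size g <= maxlen T)%N -> F g = G g) -> psum Pr F = psum Pr G.
Proof.
move=> H; rewrite /psum; apply: eq_bigr => k _; apply: eq_bigr => t Pt.
by apply: H => //; rewrite size_tuple ltn_ord.
Qed.

Lemma psum_eqP Pr Q F : Pr =1 Q -> psum Pr F = psum Q F.
Proof.
move=> H; rewrite /psum; apply: eq_bigr => k _; apply: eq_bigl => t.
by rewrite H.
Qed.

Lemma psum_pred Pr Q F :
  psum Pr (fun g => (Q g)%:R * F g) = psum (fun g => Pr g && Q g) F.
Proof.
rewrite /psum; apply: eq_bigr => k _; rewrite big_mkcond [RHS]big_mkcond /=.
apply: eq_bigr => t _.
by case: (Pr _); case: (Q _); rewrite ?mul1r ?mul0r.
Qed.

Lemma psum_ge0 Pr F : (forall g, Pr g -> 0 <= F g) -> 0 <= psum Pr F.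
Proof.
move=> H; rewrite /psum; apply: sumr_ge0 => k _; apply: sumr_ge0 => t Pt.
exact: H.
Qed.

Lemma psum_mull Pr F c : psum Pr (fun g => c * F g) = c * psum Pr F.
Proof.
rewrite /psum mulr_sumr; apply: eq_bigr => k _; rewrite mulr_sumr.
by apply: eq_bigr.
Qed.

Lemma psum_add Pr F G : psum Pr (fun g => F g + G g) = psum Pr F + psum Pr G.
Proof.
rewrite /psum -big_split; apply: eq_bigr => k _; rewrite -big_split.
by apply: eq_bigr.
Qed.

Lemma psum_sum (U : finType) Pr (F : U -> seq T -> R) :
  psum Pr (fun g => \sum_u F u g) = \sum_u psum Pr (F u).
Proof.
rewrite /psum exchange_big; apply: eq_bigr => k _.
by rewrite exchange_big.
Qed.

Lemma psum_exch Pr Q (H : seq T -> seq T -> R) :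
  psum Pr (fun g => psum Q (fun t => H t g)) = psum Q (fun t => psum Pr (fun g => H t g)).
Proof.
rewrite /psum.
transitivity (\sum_(k < maxlen T) \sum_(j < maxlen T)
   \sum_(t : (k.+1).-tuple T | Pr t) \sum_(s : (j.+1).-tuple T | Q s) H s t).
  apply: eq_bigr => k _; rewrite exchange_big /=; apply: eq_bigr => j _.
  by rewrite exchange_big.
rewrite exchange_big; apply: eq_bigr => j _.
rewrite (eq_bigr (fun k : 'I_(maxlen T) => \sum_(s : (j.+1).-tuple T | Q s) \sum_(t : (k.+1).-tuple T | Pr t) H s t)).
  by rewrite exchange_big.
by move=> k _; rewrite exchange_big.
Qed.

Lemma psum_delta Pr (H : seq T -> R) (s : seq T) :
  (0 < size s <= maxlen T)%N ->
  psum Pr (fun g => H g * (s == g)%:R) = (Pr s)%:R * H s.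
Proof.
case/andP => s0 sm.
have hn : ((size s).-1 < maxlen T)%N by rewrite prednK.
have hs : size s == ((size s).-1).+1 by rewrite prednK.
rewrite /psum (bigD1 (Ordinal hn)) //= [X in _ + X]big1 ?addr0; last first.
  move=> k /eqP hk; apply: big1 => t _.
  case: eqP => [ht|]; last by rewrite mulr0.
  exfalso; apply: hk; apply: val_inj => /=.
  by rewrite ht size_tuple.
set ts : (((size s).-1).+1).-tuple T := Tuple hs.
transitivity (\sum_(t : (((size s).-1).+1).-tuple T | Pr t) H t * (t == ts)%:R).
  apply: eq_bigr => t _.
  suff -> : (s == val t) = (t == ts) by [].
  apply/idP/idP => /eqP h; apply/eqP; last by rewrite h.
  by apply: val_inj; exact: esym h.
case Ps: (Pr s).
  rewrite (bigD1 ts) //= eqxx mulr1 big1 ?addr0 ?mul1r //.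
  by move=> t /andP [_ /negbTE ->]; rewrite mulr0.
rewrite big1 ?mul0r // => t Pt.
case: eqP => [ht|]; last by rewrite mulr0.
by move: Pt; rewrite ht /= Ps.
Qed.

Lemma psum_term Pr F s :
  (0 < size s <= maxlen T)%N -> Pr s -> (forall g, Pr g -> 0 <= F g) ->
  F s <= psum Pr F.
Proof.
move=> hs Ps H.
have := psum_delta Pr F hs; rewrite Ps mul1r => <-.
apply: psum_ler => g Pg _.
case: eqP => _; rewrite ?mulr1 ?mulr0 //; exact: H.
Qed.

End Psum.

Section Misc.
Variable R : realFieldType.

Lemma my_bigmax_le (I : finType) (P : pred I) (F : I -> R) x0 c :
  x0 <= c -> (forall i, P i -> F i <= c) -> \big[Num.max/x0]_(i | P i) F i <= c.
Proof.
move=> h0 h; apply: (big_ind (fun x => x <= c)) => //.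
by move=> a b ha hb; rewrite ge_max ha hb.
Qed.

Lemma my_bigmax_ge0 (I : finType) (P : pred I) (F : I -> R) x0 :
  x0 <= \big[Num.max/x0]_(i | P i) F i.
Proof.
elim: (index_enum I) => [|i r IH]; first by rewrite big_nil lexx.
by rewrite big_cons; case: (P i) => //; rewrite le_max IH orbT.
Qed.

Lemma my_le_bigmax (I : finType) (P : pred I) (F : I -> R) x0 j :
  P j -> F j <= \big[Num.max/x0]_(i | P i) F i.
Proof.
move=> Pj; have : j \in index_enum I by rewrite mem_index_enum.
elim: (index_enum I) => [|i r IH] //; rewrite inE big_cons.
case/orP => [/eqP <- | /IH h]; first by rewrite Pj le_max lexx.
by case: (P i) => //; rewrite le_max h orbT.
Qed.

Lemma prod_sum1 (I J : finType) (g : I -> J -> R) :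
  (forall i, \sum_j g i j = 1) -> \sum_(u : {ffun I -> J}) \prod_i g i (u i) = 1.
Proof.
move=> h; rewrite -(bigA_distr_bigA (fun i j => g i j)) /=.
by rewrite big1 // => i _; rewrite h.
Qed.

Lemma prod_marg (I J : finType) (g : I -> J -> R) i0 j0 :
  (forall i, \sum_j g i j = 1) ->
  \sum_(u : {ffun I -> J}) (\prod_i g i (u i)) * (u i0 == j0)%:R = g i0 j0.
Proof.
move=> h.
pose g' i j := g i j * (if i == i0 then (j == j0)%:R else 1).
transitivity (\sum_(u : {ffun I -> J}) \prod_i g' i (u i)).
  apply: eq_bigr => u _; rewrite /g' big_split /=; congr (_ * _).
  by rewrite (bigD1 i0) //= eqxx big1 ?mulr1 // => i /negbTE ->.
rewrite -(bigA_distr_bigA (fun i j => g' i j)) /= (bigD1 i0) //= [X in _ * X]big1 ?mulr1.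
  rewrite /g' (bigD1 j0) //= !eqxx mulr1 big1 ?addr0 //.
  by move=> j /negbTE ->; rewrite mulr0.
by move=> i /negbTE hi; rewrite /g'; under eq_bigr do rewrite hi mulr1; rewrite h.
Qed.

Lemma min_ge0 (a b : R) : 0 <= a -> 0 <= b -> 0 <= Num.min a b.
Proof. by move=> ha hb; rewrite le_min ha hb. Qed.

Lemma min_neq0 (a b : R) : 0 <= a -> 0 <= b -> Num.min a b != 0 -> (a != 0) && (b != 0).
Proof.
move=> ha hb h; apply/andP; split; apply: contraNneq h => ->.
  by rewrite min_l.
by rewrite min_r.
Qed.

End Misc.

Section PiPos.
Variables (R : realFieldType) (T : finType).

Lemma mpow_ge0 (P : T -> T -> R) t x y : (forall x y, 0 <= P x y) -> 0 <= mpow P t x y.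
Proof.
move=> hP; elim: t x y => [|t IH] x y /=; first by rewrite ler0n.
by apply: sumr_ge0 => z _; rewrite mulr_ge0.
Qed.

Lemma pi_mpow (P : T -> T -> R) pi t z : stationary P pi ->
  pi z = \sum_x pi x * mpow P t x z.
Proof.
case=> _ _ hs; elim: t z => [|t IH] z /=.
  rewrite (bigD1 z) //= eqxx mulr1 big1 ?addr0 // => x /negbTE.
  by rewrite eq_sym => ->; rewrite mulr0.
rewrite -hs.
under eq_bigr do rewrite mulr_sumr.
rewrite exchange_big /=; apply: eq_bigr => y _.
by rewrite IH mulr_suml; apply: eq_bigr => x _; rewrite mulrA.
Qed.

Lemma pi_pos (P : T -> T -> R) pi : ergodic P -> stationary P pi -> forall z, 0 < pi z.
Proof.
case=> [[hP _] hirr _] hst z.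
have [x px] : exists x, 0 < pi x.
  apply/existsP; apply: contraT; rewrite negb_exists => /forallP hn.
  case: hst => hge hsum _.
  have : \sum_x pi x <= 0.
    apply: sumr_le0 => x _; rewrite leNgt; exact: hn.
  by rewrite hsum ler10.
have [t ht] := hirr x z.
rewrite (pi_mpow t z hst).
rewrite (bigD1 x) //=; apply: ltr_wpDr.
  apply: sumr_ge0 => y _; rewrite mulr_ge0 ?mpow_ge0 //.
  by case: hst.
exact: mulr_gt0.
Qed.

End PiPos.

Section Main.
Variables (R : realFieldType) (T : finType).
Variables (P P' : T -> T -> R) (pi pi' : T -> R) (f : seq T -> R).
Hypothesis hP : forall x y, 0 <= P x y.
Hypothesis hpi : forall x, 0 <= pi x.

Definition wt (s : seq T) (z x : T) : R :=
  match [pick w | (z, w) \in steps s] with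
  | Some w => if 0 < overlap P pi z w
              then Num.min (P z x) (revP P pi w x) / overlap P pi z w
              else (x == z)%:R
  | None => (x == z)%:R
  end.

Lemma revP_ge0 w x : 0 <= revP P pi w x.
Proof. by rewrite /revP divr_ge0 ?mulr_ge0. Qed.

Lemma wt_ge0 s z x : 0 <= wt s z x.
Proof.
rewrite /wt; case: pickP => [w _|_]; last by rewrite ler0n.
case: ifP => ho; last by rewrite ler0n.
by rewrite divr_ge0 ?min_ge0 ?revP_ge0 // ltW.
Qed.

Lemma sum_delta (z : T) : \sum_x ((x == z)%:R : R) = 1.
Proof.
rewrite (bigD1 z) //= eqxx big1 ?addr0 //.
by move=> x /negbTE ->.
Qed.

Lemma wt_sum1 s z : \sum_x wt s z x = 1.
Proof.
case E: [pick w | (z, w) \in steps s] => [w|]; last first.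
  by under eq_bigr do rewrite /wt E; exact: sum_delta.
case ho: (0 < overlap P pi z w); under eq_bigr do rewrite /wt E ho.
  by rewrite -mulr_suml mulfV // gt_eqF.
exact: sum_delta.
Qed.

Lemma wt_pick s z w x : uniq s -> (z, w) \in steps s ->
  wt s z x = if 0 < overlap P pi z w
             then Num.min (P z x) (revP P pi w x) / overlap P pi z w
             else (x == z)%:R.
Proof.
move=> us hw; rewrite /wt; case: pickP => [w' hw'|]; last by move/(_ w); rewrite hw.
by rewrite (steps_fst_unique us hw' hw).
Qed.

Definition W (t : seq T) (u : {ffun T -> T}) : R := \prod_z wt (lerase t) z (u z).
Definition fin (t : seq T) (u : {ffun T -> T}) : seq T := lerase (det u (lerase t)).

Lemma W_ge0 t u : 0 <= W t u.
Proof. by apply: prodr_ge0 => z _; apply: wt_ge0. Qed.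

Lemma W_sum1 t : \sum_u W t u = 1.
Proof. exact: prod_sum1 (fun z x => wt (lerase t) z x) (wt_sum1 _). Qed.

Lemma W_marg t z x : \sum_u W t u * (u z == x)%:R = wt (lerase t) z x.
Proof. exact: prod_marg (fun z x => wt (lerase t) z x) z x (wt_sum1 _). Qed.

Lemma inP_facts t : in_P P P' t ->
  [/\ t != [::], all (fun e => edge P e.1 e.2) (steps t) &
      all (fun e => r_occ e t <= 2)%N (steps t)].
Proof.
by case/existsP => x /existsP [y /andP [_ /and5P [h1 _ _ h4 h5]]].
Qed.

Lemma fin_uniq t u : uniq (fin t u). Proof. exact: lerase_uniq. Qed.

Lemma fin_nonempty t u : t != [::] -> fin t u != [::].
Proof.
move=> tn; rewrite /fin lerase_nil.
have : lerase t != [::] by rewrite lerase_nil.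
case: (lerase t) => [|x s] // _; have [r ->] := det_cons u x s; by [].
Qed.

Lemma fin_head t u y : head y (fin t u) = head y t.
Proof. by rewrite /fin lerase_head det_head lerase_head. Qed.

Lemma fin_last t u y : last y (fin t u) = last y t.
Proof. by rewrite /fin lerase_last det_last lerase_last. Qed.

Lemma fin_size t u : t != [::] -> (0 < size (fin t u) <= maxlen T)%N.
Proof.
move=> tn; rewrite lt0n size_eq0 fin_nonempty //=.
have := card_uniqP (fin_uniq t u) => <-.
apply: (leq_trans (max_card _)); rewrite /maxlen.
have : (#|T| <= #|T| ^ 2)%N by rewrite expnS expn1; case: #|T| => // n; rewrite leq_pmulr.
lia.
Qed.

Lemma fin_r t u e : (r_occ e (fin t u) <= 1)%N.
Proof.
by rewrite /r_occ count_uniq_mem ?uniq_steps ?fin_uniq // leq_b1.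
Qed.

Lemma fin_edges t u : in_P P P' t -> W t u != 0 ->
  all (fun e => edge P e.1 e.2) (steps (fin t u)).
Proof.
move=> /inP_facts [_ he _] Wn; apply/allP => [[a b]] /lerase_steps /det_steps [[z w] hes].
have het : (z, w) \in steps t by apply: lerase_steps.
have ee : edge P z w by move/allP: he => /(_ _ het).
rewrite /=; case/andP => /andP [_ hd] hdet.
case hin: (u z \in [:: z; w]).
  by move: hd; rewrite hin /= => /eqP [-> ->].
move: hdet; rewrite hin /=.
have wn : wt (lerase t) z (u z) != 0.
  apply: contra Wn => /eqP w0; apply/eqP; rewrite /W.
  by rewrite (bigD1 z) //= w0 mul0r.
move: wn; rewrite (wt_pick _ (lerase_uniq t) hes).
case: ifP => ho; last first.
  rewrite pnatr_eq0 eqb0 negbK => /eqP hu.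
  by move: hin; rewrite hu inE eqxx.
rewrite mulf_eq0 negb_or => /andP [/(min_neq0 (hP _ _) (revP_ge0 _ _)) /andP [h1 h2] _].
have h3 : P (u z) w != 0.
  by move: h2; rewrite /revP !mulf_eq0 !negb_or => /andP [/andP [_ ->] _].
by case/orP => /eqP [-> ->]; rewrite /edge lt0r ?h1 ?h3 hP.
Qed.

Lemma inPxy_fin t u x y : in_P P P' t -> W t u != 0 ->
  in_Pxy P P' x y (fin t u) = in_Pxy P P' x y t.
Proof.
move=> tP Wn; have [tn he hr] := inP_facts tP.
rewrite /in_Pxy /is_path_xy fin_head fin_last fin_nonempty // fin_edges // tn he hr.
have -> : all (fun e => r_occ e (fin t u) <= 2)%N (steps (fin t u)).
  by apply/allP => e _; rewrite (leq_trans (fin_r t u e)).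
by [].
Qed.

Lemma key_t t x y : in_P P P' t ->
  \sum_u W t u * (in_Pxy P P' x y (fin t u))%:R = (in_Pxy P P' x y t)%:R.
Proof.
move=> tP.
transitivity (\sum_u W t u * (in_Pxy P P' x y t)%:R).
  apply: eq_bigr => u _; have [W0|Wn] := eqVneq (W t u) 0.
    by rewrite W0 !mul0r.
  by rewrite inPxy_fin.
by rewrite -mulr_suml W_sum1 mul1r.
Qed.

Definition fp (g : seq T) : R :=
  psum (in_P P P') (fun t => \sum_u f t * W t u * (fin t u == g)%:R).

Lemma psum_push (Pr : pred (seq T)) (H : seq T -> R) :
  psum Pr (fun g => H g * fp g) =
  psum (in_P P P') (fun t => \sum_u f t * W t u * ((Pr (fin t u))%:R * H (fin t u))).
Proof.
rewrite /fp.
transitivity (psum Pr (fun g => psum (in_P P P')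
   (fun t => H g * \sum_u f t * W t u * (fin t u == g)%:R))).
  by apply: psum_ext => g _ _; rewrite psum_mull.
rewrite psum_exch; apply: psum_ext => t tP _.
have tn : t != [::] by case: (inP_facts tP).
rewrite (eq_bigr (fun u => psum Pr (fun g => f t * W t u * (H g * (fin t u == g)%:R)))); last first.
  by move=> u _; rewrite psum_mull (psum_delta _ _ (fin_size u tn)).
rewrite -psum_sum; apply: psum_ext => g _ _.
rewrite mulr_sumr; apply: eq_bigr => u _; ring.
Qed.


Hypothesis hpos : forall x, 0 < pi x.
Hypothesis hf : forall g, in_P P P' g -> 0 <= f g <= 1.
Hypothesis hk : kappa_finite P P' pi f.

Lemma f_ge0 g : in_P P P' g -> 0 <= f g.
Proof. by case/hf/andP. Qed.

Lemma inPxy_inP x y g : in_Pxy P P' x y g -> in_P P P' g.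
Proof. by move=> h; apply/existsP; exists x; apply/existsP; exists y. Qed.

Lemma psum_fin_Pxy x y :
  psum (in_P P P') (fun t => \sum_u f t * W t u * ((in_Pxy P P' x y (fin t u))%:R * 1))
  = psum (in_Pxy P P' x y) f.
Proof.
transitivity (psum (in_P P P') (fun t => (in_Pxy P P' x y t)%:R * f t)).
  apply: psum_ext => t tP _; rewrite -(key_t x y tP) mulr_suml.
  by apply: eq_bigr => u _; rewrite mulr1; ring.
rewrite psum_pred; apply: psum_eqP => g /=.
by case h: (in_Pxy P P' x y g); rewrite ?andbF ?andbT //; apply: inPxy_inP h.
Qed.

Lemma fp_flow x y : psum (in_Pxy P P' x y) fp = psum (in_Pxy P P' x y) f.
Proof.
transitivity (psum (in_Pxy P P' x y) (fun g => 1 * fp g)).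
  by apply: psum_ext => g _ _; rewrite mul1r.
by rewrite psum_push psum_fin_Pxy.
Qed.

Lemma fp_ge0 g : 0 <= fp g.
Proof.
apply: psum_ge0 => t tP; apply: sumr_ge0 => u _.
by rewrite !mulr_ge0 ?f_ge0 ?W_ge0 ?ler0n.
Qed.

Lemma fp_le_Pxy x y g : in_Pxy P P' x y g -> fp g <= psum (in_Pxy P P' x y) f.
Proof.
move=> hg; rewrite -psum_fin_Pxy; apply: psum_ler => t tP _.
apply: ler_sum => u _; rewrite mulr1; apply: ler_wpM2l.
  by rewrite mulr_ge0 ?f_ge0 ?W_ge0.
by case: eqP => [->|_]; rewrite ?hg ?lexx ?ler0n.
Qed.

Lemma Apos t e : in_P P P' t -> (0 < size t <= maxlen T)%N -> 0 < f t ->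
  e \in steps t -> 0 < Acong P P' pi f e.1 e.2.
Proof.
move=> tP ts ft he; have [tn hed _] := inP_facts tP.
have ee : 0 < P e.1 e.2 by move/allP: hed => /(_ e he).
rewrite /Acong mulr_gt0 // ?invr_gt0 ?mulr_gt0 //.
set F := (fun g => (r_occ (e.1, e.2) g)%:R * (plen g)%:R * f g).
have h1 : 0 < F t.
  rewrite /F mulr_gt0 // mulr_gt0 // ltr0n.
    by rewrite /r_occ -has_pred1 has_count in he; case: (e) he => a b.
  rewrite /plen; move: tn he; clear; case: t => [|x [|y s]] //.
apply: (lt_le_trans h1); apply: psum_term => //.
  by rewrite tP; case: e he {h1 F ee} => a b ->.
move=> g /andP [gP _]; rewrite /F !mulr_ge0 ?ler0n ?f_ge0 //.
Qed.

Lemma kappa_bd t e : in_P P P' t -> (0 < size t <= maxlen T)%N -> 0 < f t ->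
  e \in steps t -> 0 < overlap P pi e.1 e.2 /\ (overlap P pi e.1 e.2)^-1 <= kappa P P' pi f.
Proof.
move=> tP ts ft he; have hA := Apos tP ts ft he.
have [_ hed _] := inP_facts tP.
have ee : edge P e.1 e.2 by move/allP: hed => /(_ e he).
split; first exact: hk.
rewrite /kappa; apply: (my_le_bigmax (fun e : T * T => (overlap P pi e.1 e.2)^-1) 0 (j := e)).
by rewrite ee hA.
Qed.

Lemma sum_count (l : seq (T * T)) (p : pred (T * T)) :
  \sum_(e <- l) ((p e)%:R : R) = (count p l)%:R.
Proof.
elim: l => [|e l IH]; first by rewrite big_nil.
by rewrite big_cons IH /= natrD.
Qed.

Lemma cnt_fst (s t : seq T) a : uniq s -> {subset s <= t} ->
  \sum_(e <- steps s) (((e.1 == a))%:R : R) <= (a \in t)%:R.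
Proof.
move=> us st; rewrite (sum_count _ (fun e => e.1 == a)).
rewrite -(count_map fst (pred1 a)) count_uniq_mem ?uniq_steps_fst // ler_nat.
case h: (a \in map fst (steps s)) => //.
case/mapP: h => e he ->; by rewrite st // steps_fst_sub.
Qed.

Lemma cnt_snd (s t : seq T) b : uniq s -> {subset s <= t} ->
  \sum_(e <- steps s) (((e.2 == b))%:R : R) <= (b \in t)%:R.
Proof.
move=> us st; rewrite (sum_count _ (fun e => e.2 == b)).
rewrite -(count_map snd (pred1 b)) count_uniq_mem ?uniq_steps_snd // ler_nat.
case h: (b \in map snd (steps s)) => //.
case/mapP: h => e he ->; by rewrite st // steps_snd_sub.
Qed.

Lemma natrA (x y : bool) : ((x && y)%:R : R) = x%:R * y%:R.
Proof. by case: x; case: y; rewrite ?mul1r ?mul0r. Qed.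

Lemma inner_bound t a b : in_P P P' t -> (0 < size t <= maxlen T)%N -> 0 < f t ->
  \sum_u W t u * (((a, b) \in steps (det u (lerase t))))%:R <=
  kappa P P' pi f * P a b * (a \in t)%:R + kappa P P' pi f * revP P pi b a * (b \in t)%:R.
Proof.
move=> tP ts ft; set s := lerase t; set K := kappa P P' pi f.
have us : uniq s := lerase_uniq t.
pose G (u : {ffun T -> T}) (e : T * T) : R :=
  ((e.1 == a) && (u e.1 == b))%:R + ((u e.1 == a) && (e.2 == b))%:R.
apply: (le_trans (y := \sum_u W t u * \sum_(e <- steps s) G u e)).
  apply: ler_sum => u _; apply: ler_wpM2l; first exact: W_ge0.
  case h: ((a, b) \in steps (det u s)); last by apply: sumr_ge0 => e _; rewrite /G addr_ge0 ?ler0n.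
  case/det_steps: h => e he /andP [/andP [hfl _] _].
  rewrite (big_rem e he) /= -[1%:R]addr0 lerD //; last by apply: sumr_ge0 => e' _; rewrite /G addr_ge0 ?ler0n.
  rewrite /G; case/orP: hfl => ->.
    by rewrite lerDl ler0n.
  by rewrite lerDr ler0n.
have -> : \sum_u W t u * \sum_(e <- steps s) G u e = (\sum_(e <- steps s) ((e.1 == a)%:R * wt s e.1 b + (e.2 == b)%:R * wt s e.1 a)).
  under eq_bigr do rewrite mulr_sumr.
  rewrite exchange_big /=; apply: eq_bigr => e _.
  rewrite -(W_marg t e.1 b) -(W_marg t e.1 a) !mulr_sumr -big_split /=.
  apply: eq_bigr => u _; rewrite /G !natrA; ring.
have K0 : 0 <= K by apply: my_bigmax_ge0.
apply: (le_trans (y := \sum_(e <- steps s) ((e.1 == a)%:R * (K * P a b) + (e.2 == b)%:R * (K * revP P pi b a)))).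
  rewrite big_seq_cond [X in _ <= X]big_seq_cond; apply: ler_sum => e /andP [he _].
  have het : e \in steps t := lerase_steps he.
  have [ho hK] := kappa_bd tP ts ft het.
  have hw x : wt s e.1 x = Num.min (P e.1 x) (revP P pi e.2 x) / overlap P pi e.1 e.2.
    by rewrite (wt_pick _ us (_ : (e.1, e.2) \in steps s)) ?ho //; case: (e) he.
  rewrite !hw; apply: lerD.
    case: eqP => [ea|_]; rewrite ?mul0r ?lexx // !mul1r -ea mulrC.
    apply: ler_pM => //; first by rewrite invr_ge0 ltW.
      by rewrite min_ge0 ?revP_ge0.
    by rewrite ge_min lexx.
  case: eqP => [eb|_]; rewrite ?mul0r ?lexx // !mul1r -eb mulrC.
  apply: ler_pM => //; first by rewrite invr_ge0 ltW.
    by rewrite min_ge0 ?revP_ge0.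
  by rewrite ge_min lexx orbT.
rewrite big_split /= -!mulr_suml; apply: lerD.
  rewrite [X in _ <= X]mulrC; apply: ler_wpM2r; first by rewrite mulr_ge0.
  by apply: cnt_fst => // x /lerase_sub.
rewrite [X in _ <= X]mulrC; apply: ler_wpM2r; first by rewrite mulr_ge0 ?revP_ge0.
by apply: cnt_snd => // x /lerase_sub.
Qed.

Lemma rplen_fin t u e : (r_occ e (fin t u) * plen (fin t u) <= 1 * (2 * plen t))%N.
Proof.
apply: leq_mul; first exact: fin_r.
have h1 := lerase_size (det u (lerase t)).
have h2 := det_plen u (lerase t).
have h3 := lerase_size t.
rewrite /plen -/(fin t u) in h1 *; rewrite -mul2n in h2.
lia.
Qed.

Lemma per_t t a b : in_P P P' t -> (0 < size t <= maxlen T)%N ->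
  \sum_u f t * W t u * ((in_P P P' (fin t u) && ((a, b) \in steps (fin t u)))%:R *
        ((r_occ (a, b) (fin t u))%:R * (plen (fin t u))%:R))
  <= 2 * kappa P P' pi f * P a b * ((a \in t)%:R * ((plen t)%:R * f t)) +
     2 * kappa P P' pi f * revP P pi b a * ((b \in t)%:R * ((plen t)%:R * f t)).
Proof.
move=> tP ts; set K := kappa P P' pi f.
have K0 : 0 <= K by apply: my_bigmax_ge0.
case: (eqVneq (f t) 0) => [f0|fn].
  rewrite f0 big1 => [|u _]; last by rewrite !mul0r.
  by rewrite !mulr0 addr0 lexx.
have ft : 0 < f t by rewrite lt0r fn f_ge0.
have E : 2 * K * P a b * ((a \in t)%:R * ((plen t)%:R * f t)) +
     2 * K * revP P pi b a * ((b \in t)%:R * ((plen t)%:R * f t)) =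
   f t * ((2 * plen t)%:R * (K * P a b * (a \in t)%:R + K * revP P pi b a * (b \in t)%:R)).
  by rewrite natrM; ring.
rewrite E; apply: (le_trans (y := f t * ((2 * plen t)%:R *
     \sum_u W t u * (((a, b) \in steps (det u (lerase t))))%:R))).
  rewrite !mulr_sumr; apply: ler_sum => u _.
  rewrite -[f t * W t u * _]mulrA; apply: ler_wpM2l; first exact: f_ge0.
  rewrite [X in _ <= X]mulrCA; apply: ler_wpM2l; first exact: W_ge0.
  case hq: (in_P P P' (fin t u) && ((a, b) \in steps (fin t u))); last first.
    by rewrite mul0r mulr_ge0 ?ler0n.
  case/andP: hq => _ /lerase_steps ->; rewrite -!natrM ler_nat /= mul1n muln1.
  by have := rplen_fin t u (a, b); rewrite mul1n.
apply: ler_wpM2l; first exact: f_ge0.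
apply: ler_wpM2l; first exact: ler0n.
exact: inner_bound.
Qed.

Lemma Bpsum z : psum (fun g => in_P P P' g && (z \in g)) (fun g => (plen g)%:R * f g)
   = pi z * Bcong P P' pi f z.
Proof. by rewrite /Bcong mulrA mulfV ?mul1r // gt_eqF. Qed.

Lemma Afp_bound a b : edge P a b ->
  Acong P P' pi fp a b <= 2 * kappa P P' pi f * (Bcong P P' pi f a + Bcong P P' pi f b).
Proof.
move=> eab; rewrite /Acong.
rewrite (psum_push (fun g => in_P P P' g && ((a, b) \in steps g))
                   (fun g => (r_occ (a, b) g)%:R * (plen g)%:R)).
have H1 := psum_ler (fun t tP ts => per_t a b tP ts).
rewrite psum_add !psum_mull !psum_pred !Bpsum in H1.
have hpa : 0 < pi a * P a b by rewrite mulr_gt0.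
apply: le_trans (ler_wpM2l _ H1) _; first by rewrite invr_ge0 ltW.
rewrite /revP le_eqVlt; apply/orP; left; apply/eqP.
have pa : pi a != 0 by rewrite gt_eqF.
have pb : pi b != 0 by rewrite gt_eqF.
have pab : P a b != 0 by rewrite gt_eqF.
by field; rewrite pa pb pab.
Qed.

End Main.

Lemma le1_of_sum (T : finType) (R : realFieldType) (F : T -> R) j :
  (forall i, 0 <= F i) -> \sum_i F i = 1 -> F j <= 1.
Proof.
move=> h0 h1; rewrite -h1 (bigD1 j) //= lerDl.
by apply: sumr_ge0 => i _.
Qed.

Unset Implicit Arguments.

Theorem lemma27 (R : realFieldType) (T : finType) (P P' : T -> T -> R)
  (pi pi' : T -> R) (f : seq T -> R) :
  ergodic P -> ergodic P' -> stationary P pi -> stationary P' pi' ->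
  is_flow P P' pi' f -> kappa_finite P P' pi f ->
  exists f' : seq T -> R,
    is_flow P P' pi' f' /\
    Amax P P' pi f' <= 8 * kappa P P' pi f * Bmax P P' pi f.
Proof.
move=> eP eP' stP stP' [hf1 hf2] hk.
have hP : forall x y, 0 <= P x y by case: eP => [[]].
have hpi : forall x, 0 <= pi x by case: stP.
have hpos := pi_pos eP stP.
exists (fp P P' pi f); split; first split.
- move=> g gP; rewrite (fp_ge0 hP hpi hf1) /=.
  case/existsP: gP => x /existsP [y gxy].
  apply: (le_trans (fp_le_Pxy hP hpi hf1 gxy)).
  have exy : edge P' x y by case/andP: gxy.
  rewrite hf2 //.
  case: eP' => [[hP'0 hP'1] _ _]; case: stP' => h0 h1 _.
  apply: mulr_ile1 => //; first exact: le1_of_sum.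
  exact: le1_of_sum.
- by move=> x y exy; rewrite fp_flow // hf2.
set K := kappa P P' pi f; set M := Bmax P P' pi f.
have K0 : 0 <= K by apply: my_bigmax_ge0.
have M0 : 0 <= M by apply: my_bigmax_ge0.
have BM z : Bcong P P' pi f z <= M.
  by apply: (my_le_bigmax (fun z => Bcong P P' pi f z) 0 (P := xpredT)).
apply: my_bigmax_le; first by rewrite !mulr_ge0.
move=> [a b] /= eab.
apply: (le_trans (Afp_bound hP hpi hpos hf1 hk eab)).
have h1 : 0 <= K * (M - Bcong P P' pi f a) by rewrite mulr_ge0 // subr_ge0.
have h2 : 0 <= K * (M - Bcong P P' pi f b) by rewrite mulr_ge0 // subr_ge0.
have h3 := mulr_ge0 K0 M0.
rewrite -/K; nra.
Qed.
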